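(* Let $X$ be a $T_1$ topological space. An ideal $I$ of $T''(X)$ is a $z$-ideal if and only if for all $f\in T''(X)$ and $g\in I$ with $Z(f)=Z(g)$ we have $f\in I$.
   Context: $C(X)$ is the ring of real-valued continuous functions on $X$; a cozero set is a set $\{x: g(x)\neq 0\}$ with $g\in C(X)$. $T''(X)$ is the ring (under pointwise operations) of all functions $f\colon X\to\mathbb{R}$ for which there is a dense cozero set $U$ of $X$ with $f|_U$ continuous. For any $f\colon X\to\mathbb{R}$, $Z(f)=\{x\in X: f(x)=0\}$. In a commutative ring $R$ with unity, $M(a)$ denotes the intersection of all maximal ideals of $R$ containing $a$, and an ideal $I$ is a $z$-ideal if $M(a)\subseteq I$ for every $a\in I$. *)

(* Defs.v *)
From HB Require Import structures.
From mathcomp Require Import all_boot all_order all_algebra.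
From mathcomp Require Import all_classical all_reals all_analysis.
Set Implicit Arguments. Unset Strict Implicit. Unset Printing Implicit Defensive.
Import Order.TTheory GRing.Theory Num.Theory.
Import numFieldNormedType.Exports.
Local Open Scope classical_set_scope.
Local Open Scope ring_scope.

Definition cozero_set (R : realType) (X : topologicalType) (U : set X) : Prop :=
  exists g : X -> R, continuous g /\ U = [set x | g x != 0].
Arguments cozero_set : clear implicits.

Definition Tpp (R : realType) (X : topologicalType) : set (X -> R) :=
  [set f | exists U : set X, cozero_set R X U /\ dense U /\ {within U, continuous f}].

Arguments Tpp : clear implicits.

Definition Zset (R : realType) (X : Type) (f : X -> R) : set X :=
  [set x | f x = 0].

Definition is_ideal (R : realType) (X : topologicalType) (I : set (X -> R)) : Prop :=
  [/\ I `<=` Tpp R X,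
      I (fun _ => 0),
      (forall f g, I f -> I g -> I (fun x => f x - g x)) &
      (forall f g, Tpp R X f -> I g -> I (fun x => f x * g x))].

Definition maximal_ideal (R : realType) (X : topologicalType) (M : set (X -> R)) : Prop :=
  [/\ is_ideal M, M <> Tpp R X &
      (forall J, is_ideal J -> M `<=` J -> J = M \/ J = Tpp R X)].

(* M(a): intersection of all maximal ideals of T''(X) containing a
   (the whole ring T''(X) if there is none). *)
Definition Mset (R : realType) (X : topologicalType) (a : X -> R) : set (X -> R) :=
  [set f | Tpp R X f /\ forall M, maximal_ideal M -> M a -> M f].

Definition z_ideal (R : realType) (X : topologicalType) (I : set (X -> R)) : Prop :=
  forall a, I a -> Mset a `<=` I.

(* Main.v *)
Require Import Defs.
From HB Require Import structures.
From mathcomp Require Import all_boot all_order all_algebra.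
From mathcomp Require Import all_classical all_reals all_analysis.
From mathcomp Require Import lra.
Local Open Scope classical_set_scope.
Local Open Scope ring_scope.
Import Order.TTheory GRing.Theory Num.Theory.
Import numFieldNormedType.Exports.

Lemma cozero_open (R : realType) (X : topologicalType) (U : set X) :
  cozero_set R X U -> open U.
Proof.
move=> [g [cg ->]].
have -> : [set x | g x != 0] = g @^-1` [set x : R | x != 0] by [].
apply: open_comp; last exact: open_neq.
by move=> x _; exact: cg.
Qed.

Lemma cozeroI (R : realType) (X : topologicalType) (U V : set X) :
  cozero_set R X U -> cozero_set R X V -> cozero_set R X (U `&` V).
Proof.
move=> [g1 [c1 ->]] [g2 [c2 ->]].
exists (fun x => g1 x * g2 x); split.
  by move=> x; apply: cvgM; [exact: c1|exact: c2].
by apply/seteqP; split=> x /=; rewrite mulf_eq0 negb_or => /andP.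
Qed.

Lemma denseI (X : topologicalType) (U V : set X) :
  open U -> dense U -> dense V -> dense (U `&` V).
Proof.
move=> oU dU dV O O0 oO.
have [y [Oy Uy]] := dU O O0 oO.
have [z [[Oz Uz] Vz]] := dV (O `&` U) (ex_intro _ y (conj Oy Uy)) (openI oO oU).
by exists z.
Qed.

Lemma Tpp_in (R : realType) (X : topologicalType) (f : X -> R) :
  Tpp R X f <-> exists U, [/\ cozero_set R X U, dense U & forall x, U x -> {for x, continuous f}].
Proof.
split.
  move=> [U [cU [dU cf]]]; exists U; split => //.
  move: cf; rewrite continuous_open_subspace; last exact: cozero_open cU.
  by move=> cf x Ux; apply: cf; rewrite inE.
move=> [U [cU dU cf]]; exists U; split => //; split => //.
rewrite continuous_open_subspace; last exact: cozero_open cU.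
by move=> x; rewrite inE => Ux; apply: cf.
Qed.

Lemma Tpp_op (R : realType) (X : topologicalType) (f g h : X -> R) :
  (forall x, {for x, continuous f} -> {for x, continuous g} -> {for x, continuous h}) ->
  Tpp R X f -> Tpp R X g -> Tpp R X h.
Proof.
move=> H /Tpp_in [U [cU dU cf]] /Tpp_in [V [cV dV cg]].
apply/Tpp_in; exists (U `&` V); split.
- exact: cozeroI.
- apply: denseI => //; exact: cozero_open cU.
- by move=> x [Ux Vx]; apply: H; [apply: cf|apply: cg].
Qed.

Lemma Tpp_cst (R : realType) (X : topologicalType) (c : R) :
  Tpp R X (fun _ => c).
Proof.
apply/Tpp_in; exists setT; split.
- exists (fun _ => 1 : R); split; first exact: cst_continuous.
  by apply/seteqP; split=> x //= _; exact: oner_neq0.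
- move=> O [x Ox] _; by exists x.
- by move=> x _; exact: cst_continuous.
Qed.

Lemma Tpp_sub (R : realType) (X : topologicalType) (f g : X -> R) :
  Tpp R X f -> Tpp R X g -> Tpp R X (fun x => f x - g x).
Proof. by apply: Tpp_op => x cf cg; apply: cvgB. Qed.

Lemma Tpp_add (R : realType) (X : topologicalType) (f g : X -> R) :
  Tpp R X f -> Tpp R X g -> Tpp R X (fun x => f x + g x).
Proof. by apply: Tpp_op => x cf cg; apply: cvgD. Qed.

Lemma Tpp_mul (R : realType) (X : topologicalType) (f g : X -> R) :
  Tpp R X f -> Tpp R X g -> Tpp R X (fun x => f x * g x).
Proof. by apply: Tpp_op => x cf cg; apply: cvgM. Qed.

Lemma Tpp_inv (R : realType) (X : topologicalType) (f : X -> R) :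
  (forall x, f x != 0) -> Tpp R X f -> Tpp R X (fun x => (f x)^-1).
Proof.
move=> nz Tf; apply: (@Tpp_op R X f f) => // x cf _.
exact: cvgV.
Qed.

Lemma Mx_max (R : realType) (X : topologicalType) (x : X) :
  maximal_ideal (fun h : X -> R => Tpp R X h /\ h x = 0).
Proof.
split.
- split.
  + by move=> h [].
  + by split; [exact: Tpp_cst|].
  + by move=> f g [Tf fx] [Tg gx]; split; [exact: Tpp_sub|rewrite fx gx subr0].
  + by move=> f g Tf [Tg gx]; split; [exact: Tpp_mul|rewrite gx mulr0].
- move=> E; have := Tpp_cst R X 1; rewrite -E.
  by move=> [_ /eqP]; rewrite oner_eq0.
- move=> J [JT J0 Jsub Jmul] MJ.
  have [[h [Jh hx]]|nh] := pselect (exists h, J h /\ h x != 0).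
  + right; apply/seteqP; split => // k Tk.
    have Th := JT _ Jh.
    set c := k x / h x.
    have Jq : J (fun y => c * h y) by apply: Jmul => //; exact: Tpp_cst.
    have Jp : J (fun y => k y - c * h y).
      apply: MJ; split.
        by apply: Tpp_sub => //; apply: Tpp_mul => //; exact: Tpp_cst.
      by rewrite /c mulfVK // subrr.
    have := Jsub _ _ Jp (Jsub _ _ J0 Jq).
    congr J; apply: funext => y; by rewrite sub0r opprK subrK.
  + left; apply/seteqP; split => // h Jh; split; first exact: JT.
    apply/eqP; apply: contrapT => hx; apply: nh; exists h; split => //.
    exact/negP.
Qed.

Lemma sq_pos (R : realType) (a b : R) : b != 0 -> a * a + b * b != 0.
Proof.
move=> bn; apply/eqP => h0.
have [gl|gg|ge] := ltgtP b 0.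
+ nra.
+ nra.
+ by move/eqP: bn.
Qed.

Theorem theorem5p01 (R : realType) (X : topologicalType)
  (hT1 : @accessible_space X) (I : set (X -> R)) (hI : is_ideal I) :
  z_ideal I <->
  (forall f g : X -> R, Tpp R X f -> I g -> Zset f = Zset g -> I f).
Proof.
case: hI => [IT I0 Isub Imul].
split.
- move=> zI f g Tf Ig Zfg.
  apply: (zI g Ig); split => // M [[MT M0 Msub Mmul] Mneq Mmax] Mg.
  have Madd : forall a b, M a -> M b -> M (fun y => a y + b y).
    move=> a b Ma Mb; have := Msub _ _ Ma (Msub _ _ M0 Mb).
    by congr M; apply: funext => y; rewrite sub0r opprK.
  apply: contrapT => nMf.
  pose J := fun t : X -> R => exists m r, [/\ M m, Tpp R X r &
                              t = fun y => m y + r y * f y].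
  have MJ : M `<=` J.
    move=> m Mm; exists m, (fun _ => 0); split => //; first exact: Tpp_cst.
    by apply: funext => y; rewrite mul0r addr0.
  have iJ : is_ideal J.
    split.
    + move=> t [m [r [Mm Tr ->]]]; apply: Tpp_add; first exact: MT.
      exact: Tpp_mul.
    + exact: MJ.
    + move=> t1 t2 [m1 [r1 [M1 T1 ->]]] [m2 [r2 [M2 T2 ->]]].
      exists (fun y => m1 y - m2 y), (fun y => r1 y - r2 y); split.
      * exact: Msub.
      * exact: Tpp_sub.
      * apply: funext => y /=; rewrite mulrBl; lra.
    + move=> k t Tk [m [r [Mm Tr ->]]].
      exists (fun y => k y * m y), (fun y => k y * r y); split.
      * exact: Mmul.
      * exact: Tpp_mul.
      * apply: funext => y /=; rewrite mulrDr mulrA //.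
  have [JM|JT] := Mmax J iJ MJ.
    apply: nMf; rewrite -JM; exists (fun _ => 0), (fun _ => 1); split => //.
      exact: Tpp_cst.
    by apply: funext => y; rewrite mul1r add0r.
  have : J (fun _ => 1) by rewrite JT; exact: Tpp_cst.
  move=> [m [r [Mm Tr E1]]].
  pose h := fun y => m y * m y + g y * g y.
  have Mh : M h by apply: Madd; apply: Mmul => //; [exact: MT|exact: MT].
  have hnz : forall y, h y != 0.
    move=> y; rewrite /h.
    have [gy0|gyn] := eqVneq (g y) 0.
      have fy0 : f y = 0.
        have : Zset g y by [].
        by rewrite -Zfg.
      have := congr1 (fun F => F y) E1 => /=.
      rewrite fy0 mulr0 addr0 => <-; rewrite gy0 mulr0 addr0 mulr1.
      exact: oner_neq0.
    exact: sq_pos.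
  have M1 : M (fun _ => 1).
    have := Mmul _ _ (@Tpp_inv R X h hnz (MT _ Mh)) Mh.
    by congr M; apply: funext => y; rewrite mulVf.
  apply: Mneq; apply/seteqP; split => // t Tt.
  have := Mmul _ _ Tt M1; congr M; apply: funext => y; exact: mulr1.
- move=> H a Ia f [Tf Mf].
  apply: (H f (fun y => f y * a y)) => //; first exact: Imul.
  apply/seteqP; split => y /=; rewrite /Zset /=.
    by move=> ->; rewrite mul0r.
  move/eqP; rewrite mulf_eq0 => /orP [/eqP //|/eqP ay0].
  by have [] := Mf _ (@Mx_max R X y) (conj (IT _ Ia) ay0).
Qed.
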